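(* Let $\mathcal F$ be a lattice filter and $P$ an implication filter of an MV-algebra $\mathcal L$. Then $J_u(\mathcal F,P)$ is the smallest lattice filter $\mathcal H$ such that $\mathcal F\subseteq\mathcal H$ and $P\subseteq\mathcal K(\mathcal H)$.
   Context: $\mathcal L=(L,\oplus,\lnot,0)$ is an MV-algebra. We write $x\to y=\lnot x\oplus y$ and use the usual lattice order. A lattice filter is a nonempty upward-closed subset closed under $\wedge$. An implication filter is a subset $P\subseteq L$ containing $1$ such that $x\in P$ and $x\to y\in P$ imply $y\in P$. For an implication filter $P$, let $\sim_P$ be the congruence given by $x\sim_P y$ iff $x\to y\in P$ and $y\to x\in P$. Let $\eta_P\colon\mathcal L\to\mathcal L/P$ be the canonical epimorphism, and for $X\subseteq L$ let $X/P=\eta_P[X]$. Define $J_u(\mathcal F,P)=\eta_P^{-1}[\mathcal F/P]$. The kernel of an upward-closed set $\mathcal H$ is $\mathcal K(\mathcal H)=\{z: \forall a\notin\mathcal H,\ z\to a\notin\mathcal H\}$. *)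

(* Defs.v *)
From Stdlib Require Import Classical.

Set Implicit Arguments.

Record MVAlgebra := {
  mv_car :> Type;
  mv_oplus : mv_car -> mv_car -> mv_car;
  mv_neg : mv_car -> mv_car;
  mv_zero : mv_car;
  mv_oplusA : forall x y z, mv_oplus x (mv_oplus y z) = mv_oplus (mv_oplus x y) z;
  mv_oplusC : forall x y, mv_oplus x y = mv_oplus y x;
  mv_oplus0 : forall x, mv_oplus x mv_zero = x;
  mv_negK : forall x, mv_neg (mv_neg x) = x;
  mv_oplus1 : forall x, mv_oplus x (mv_neg mv_zero) = mv_neg mv_zero;
  mv_luk : forall x y,
    mv_oplus (mv_neg (mv_oplus (mv_neg x) y)) y
    = mv_oplus (mv_neg (mv_oplus (mv_neg y) x)) x
}.

Section MV.
Context {L : MVAlgebra}.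

Definition mv_one : L := mv_neg L (mv_zero L).
Definition mv_imp (x y : L) : L := mv_oplus L (mv_neg L x) y.
Definition mv_le (x y : L) : Prop := mv_imp x y = mv_one.
Definition mv_join (x y : L) : L := mv_oplus L (mv_neg L (mv_oplus L (mv_neg L x) y)) y.
Definition mv_meet (x y : L) : L := mv_neg L (mv_join (mv_neg L x) (mv_neg L y)).

Definition subset (X Y : L -> Prop) : Prop := forall x, X x -> Y x.

Definition upward_closed (H : L -> Prop) : Prop :=
  forall x y, H x -> mv_le x y -> H y.

Definition lattice_filter (F : L -> Prop) : Prop :=
  (exists x, F x) /\ upward_closed F /\ (forall x y, F x -> F y -> F (mv_meet x y)).

Definition implication_filter (P : L -> Prop) : Prop :=
  P mv_one /\ (forall x y, P x -> P (mv_imp x y) -> P y).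

Definition simP (P : L -> Prop) (x y : L) : Prop := P (mv_imp x y) /\ P (mv_imp y x).

(* the canonical epimorphism eta_P : L -> L/P, sending x to its ~_P-class *)
Definition etaP (P : L -> Prop) (x : L) : L -> Prop := fun y => simP P x y.

(* J_u(F,P) = eta_P^{-1}[ eta_P[F] ] *)
Definition J_u (F P : L -> Prop) : L -> Prop :=
  fun x => exists f, F f /\ etaP P x = etaP P f.

Definition kernel (H : L -> Prop) : L -> Prop :=
  fun z => forall a, ~ H a -> ~ H (mv_imp z a).

End MV.

(* Main.v *)
Require Import Defs.
From Stdlib Require Import Classical FunctionalExtensionality PropExtensionality.

Set Implicit Arguments.
Section Toolkit.
Variable L : MVAlgebra.
Local Notation o := (mv_oplus L).
Local Notation n := (mv_neg L).

Lemma neg1 : n (@mv_one L) = mv_zero L.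
Proof. unfold mv_one; apply mv_negK. Qed.

Lemma zero_l (x : L) : o (mv_zero L) x = x.
Proof. rewrite mv_oplusC; apply mv_oplus0. Qed.

Lemma imp_one_l (a : L) : mv_imp mv_one a = a.
Proof. unfold mv_imp; rewrite neg1; apply zero_l. Qed.

Lemma imp_one_r (a : L) : mv_imp a mv_one = mv_one.
Proof. unfold mv_imp, mv_one; apply mv_oplus1. Qed.

Lemma compl (x : L) : o (n x) x = mv_one.
Proof.
  pose proof (mv_luk L mv_one x) as H.
  rewrite neg1, zero_l in H. rewrite H. unfold mv_one. apply mv_oplus1.
Qed.

Lemma compl' (x : L) : o x (n x) = mv_one.
Proof. rewrite mv_oplusC; apply compl. Qed.

Lemma imp_refl (x : L) : mv_imp x x = mv_one.
Proof. apply compl. Qed.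

Lemma exch (x y z : L) : mv_imp x (mv_imp y z) = mv_imp y (mv_imp x z).
Proof.
  unfold mv_imp. rewrite !mv_oplusA. rewrite (mv_oplusC L (n x) (n y)). reflexivity.
Qed.

Lemma ac4 (a b c d : L) : o a (o b (o c d)) = o (o b d) (o a c).
Proof.
  rewrite (mv_oplusC L c d). rewrite !mv_oplusA. rewrite (mv_oplusC L a b).
  rewrite <- (mv_oplusA L b a d). rewrite (mv_oplusC L a d). rewrite !mv_oplusA. reflexivity.
Qed.

Lemma trans_id (x y z : L) :
  mv_imp (mv_imp x y) (mv_imp (mv_imp y z) (mv_imp x z)) = mv_one.
Proof.
  unfold mv_imp. rewrite ac4. rewrite (mv_luk L y z).
  rewrite <- (mv_oplusA L (n (o (n z) y))).
  assert (E : o y (o (n (o (n x) y)) (n x)) = mv_one).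
  { rewrite (mv_oplusC L (n (o (n x) y))), mv_oplusA, (mv_oplusC L y).
    rewrite mv_oplusC. apply compl. }
  rewrite E. unfold mv_one. apply mv_oplus1.
Qed.

Lemma join_comm (x y : L) : mv_join x y = mv_join y x.
Proof. unfold mv_join. apply mv_luk. Qed.

Lemma join_le (x y : L) : mv_imp x y = mv_one -> mv_join x y = y.
Proof. intro H. change (mv_imp (mv_imp x y) y = y). rewrite H. apply imp_one_l. Qed.

Lemma le_join (f y : L) : mv_imp f (mv_join f y) = mv_one.
Proof. change (mv_imp f (mv_imp (mv_imp f y) y) = mv_one). rewrite exch. apply imp_refl. Qed.

Section Filt.
Variable P : L -> Prop.
Hypothesis HP : implication_filter P.

Lemma P_one : P mv_one. Proof. apply HP. Qed.
Lemma P_mp x y : P x -> P (mv_imp x y) -> P y. Proof. apply HP. Qed.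

Lemma sim_refl x : simP P x x.
Proof. split; rewrite imp_refl; apply P_one. Qed.

Lemma sim_sym x y : simP P x y -> simP P y x.
Proof. intros [a b]; split; auto. Qed.

Lemma P_trans x y z : P (mv_imp x y) -> P (mv_imp y z) -> P (mv_imp x z).
Proof.
  intros H1 H2. apply (P_mp (mv_imp x z) H2). apply (P_mp _ H1). rewrite trans_id. apply P_one.
Qed.

Lemma sim_trans x y z : simP P x y -> simP P y z -> simP P x z.
Proof. intros [a b] [c d]; split; eapply P_trans; eauto. Qed.

Lemma contra a a' b : P (mv_imp a' a) -> P (mv_imp (mv_imp a b) (mv_imp a' b)).
Proof. intro H. apply (P_mp (mv_imp (mv_imp a b) (mv_imp a' b)) H). rewrite trans_id. apply P_one. Qed.

Lemma sim_neg x y : simP P x y -> simP P (n x) (n y).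
Proof.
  assert (E : forall u v : L, mv_imp (n u) (n v) = mv_imp v u).
  { intros u v. unfold mv_imp. rewrite mv_negK. apply mv_oplusC. }
  intros [a b]; split; rewrite E; auto.
Qed.

Lemma sim_join_l a a' b : simP P a a' -> simP P (mv_join a b) (mv_join a' b).
Proof.
  intros [h1 h2]. split.
  - change (P (mv_imp (mv_imp (mv_imp a b) b) (mv_imp (mv_imp a' b) b))).
    apply contra. apply contra. exact h1.
  - change (P (mv_imp (mv_imp (mv_imp a' b) b) (mv_imp (mv_imp a b) b))).
    apply contra. apply contra. exact h2.
Qed.

Lemma sim_join a a' b b' : simP P a a' -> simP P b b' ->
  simP P (mv_join a b) (mv_join a' b').
Proof.
  intros H1 H2. eapply sim_trans. apply sim_join_l; exact H1.
  rewrite (join_comm a'), (join_comm a'). apply sim_join_l; exact H2.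
Qed.

Lemma sim_meet a a' b b' : simP P a a' -> simP P b b' ->
  simP P (mv_meet a b) (mv_meet a' b').
Proof.
  intros H1 H2. unfold mv_meet. apply sim_neg. apply sim_join; apply sim_neg; auto.
Qed.

Lemma eta_iff x f : etaP P x = etaP P f <-> simP P x f.
Proof.
  split.
  - intro E. assert (H : etaP P f f) by apply sim_refl.
    rewrite <- E in H. exact H.
  - intro S. apply functional_extensionality. intro y.
    apply propositional_extensionality. unfold etaP. split; intro T.
    + eapply sim_trans; [apply sim_sym; exact S| exact T].
    + eapply sim_trans; [exact S| exact T].
Qed.

End Filt.
End Toolkit.

Theorem mainTheorem8 (L : MVAlgebra) (F P : L -> Prop) :
  lattice_filter F -> implication_filter P ->
  (lattice_filter (J_u F P) /\ subset F (J_u F P) /\ subset P (kernel (J_u F P))) /\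
  (forall H : L -> Prop,
     lattice_filter H -> subset F H -> subset P (kernel H) -> subset (J_u F P) H).
Proof.
  intros [[f0 Hf0] [FU FM]] HP.
  assert (JE : forall x, J_u F P x <-> exists f, F f /\ simP P x f).
  { intro x. unfold J_u. split; intros [f [Ff E]]; exists f; split; auto;
      apply (eta_iff HP); auto. }
  split; [split; [|split]|].
  - split; [exists f0; apply JE; exists f0; split; auto; apply sim_refl; auto|split].
    + intros x y Jx Lxy. apply JE in Jx. destruct Jx as [f [Ff S]].
      apply JE. exists (mv_join f y). split.
      * eapply FU; [exact Ff| apply le_join].
      * apply sim_sym.
        rewrite <- (@join_le L x y Lxy) at 2. apply sim_join_l; auto. apply sim_sym; auto.
    + intros x y Jx Jy. apply JE in Jx. apply JE in Jy.
      destruct Jx as [f [Ff S]]. destruct Jy as [g [Fg T]].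
      apply JE. exists (mv_meet f g). split; auto. apply sim_meet; auto.
  - intros x Fx. apply JE. exists x. split; auto. apply sim_refl; auto.
  - intros z Pz a nJa Jza. apply nJa. apply JE in Jza. destruct Jza as [f [Ff S]].
    apply JE. exists f. split; auto. eapply sim_trans; [exact HP| |exact S].
    split.
    + rewrite exch, imp_refl, imp_one_r. apply (P_one HP).
    + apply (@P_mp L P HP z (mv_imp (mv_imp z a) a) Pz). rewrite exch, imp_refl. apply (P_one HP).
  - intros H [_ [HU _]] HF HK x Jx. apply JE in Jx. destruct Jx as [f [Ff [_ S]]].
    destruct (classic (H x)) as [Hx|nHx]; auto. exfalso.
    apply (HK _ S x nHx). eapply HU; [apply HF; exact Ff| apply le_join].
Qed.
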